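(* Let $\delta\in\Lambda$ be any root ($\delta^2=-2$) and let $\delta=\delta_{\mathbb K_\gamma}+\delta_{\mathbb E_\gamma}$ with $\delta_{\mathbb K_\gamma}\in\mathbb K_\gamma^\vee$, $\delta_{\mathbb E_\gamma}\in\mathbb E_\gamma^\vee$ be its orthogonal decomposition. Then $\delta_{\mathbb K_\gamma}-d_1\in\mathbb K_\gamma$ and $\delta_{\mathbb E_\gamma}-d_2\in\mathbb E_\gamma$. In particular $\Lambda=\mathbb Z\delta+\mathbb K_\gamma\oplus\mathbb E_\gamma$.
   Context: $\Lambda=\mathbb U(2)\oplus\mathbb U\oplus\mathbb E_8(2)$ (Enriques lattice; $\mathbb U$ hyperbolic plane, $\mathbb E_8$ negative-definite, $(2)$ scaling by 2). Setting: $\iota$ is a fixed-point-free involution of a Kummer surface $K_{\tau,\tau'}=\mathrm{Km}(E_\tau\times E_{\tau'})$ with $\mathbf K\subset H^2(K_{\tau,\tau'},\mathbb Z)_-$, where $\mathbf K\cong\mathbb U(2)\oplus\mathbb U(2)$ is the image of $H^1(E_\tau,\mathbb Z)\otimes H^1(E_{\tau'},\mathbb Z)$; $\alpha$ is a marking with $\alpha(H^2_-)=\Lambda$; $\gamma\in A_{\mathbf K}\setminus\{0\}$ is the patching element of $\iota$. Put $\mathbb K_\gamma=\alpha(\mathbf K)\cong\mathbb U(2)\oplus\mathbb U(2)$ and $\mathbb E_\gamma=\alpha(\mathbf K^{\perp_{H^2_-}})$, the orthogonal complement of $\mathbb K_\gamma$ in $\Lambda$, which is isometric to $\mathbb E_8(2)$;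 both embed primitively in $\Lambda$, and $\Lambda=\mathbb Z(d_1+d_2)+\mathbb K_\gamma\oplus\mathbb E_\gamma\subset\mathbb K_\gamma^\vee\oplus\mathbb E_\gamma^\vee$ for some $d_1\in\mathbb K_\gamma^\vee\setminus\mathbb K_\gamma$, $d_2\in\mathbb E_\gamma^\vee\setminus\mathbb E_\gamma$. *)

(* Defs.v *)
(* Lattices are modelled inside V = Q^12 = 'rV[rat]_12. *)
From HB Require Import structures.
From mathcomp Require Import all_boot all_order all_algebra.
Set Implicit Arguments. Unset Strict Implicit. Unset Printing Implicit Defensive.
Import Order.TTheory GRing.Theory Num.Theory.
Local Open Scope ring_scope.

(* Negative-definite E8 (Bourbaki labelling, 0-indexed):
   -2 on the diagonal, +1 on the edges of the Dynkin diagram. *)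
Definition e8_edge (i j : nat) : bool :=
  ((i, j) \in [:: (0,2); (2,3); (3,4); (4,5); (5,6); (6,7); (1,3)])%N ||
  ((j, i) \in [:: (0,2); (2,3); (3,4); (4,5); (5,6); (6,7); (1,3)])%N.
Definition e8_entry (i j : nat) : int :=
  if i == j then -2 else if e8_edge i j then 1 else 0.

Definition E8_2Gram : 'M[rat]_8 := \matrix_(i, j) (2 * e8_entry i j)%:~R.

Definition KGram : 'M[rat]_4 :=
  \matrix_(i, j)
    (if ((i == 0 :> nat) && (j == 1 :> nat)) || ((i == 1 :> nat) && (j == 0 :> nat))
        || ((i == 2 :> nat) && (j == 3 :> nat)) || ((i == 3 :> nat) && (j == 2 :> nat))
     then 2 else 0).

(* Gram matrix of the Enriques lattice  U(2) + U + E8(2),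
   coordinates 0,1 : U(2);  2,3 : U;  4..11 : E8(2). *)
Definition lam_entry (i j : nat) : int :=
  if ((i == 0) && (j == 1)) || ((i == 1) && (j == 0)) then 2
  else if ((i == 2) && (j == 3)) || ((i == 3) && (j == 2)) then 1
  else if (4 <= i)%N && (4 <= j)%N then 2 * e8_entry (i - 4) (j - 4)
  else 0.
Definition LamGram : 'M[rat]_12 := \matrix_(i, j) (lam_entry i j)%:~R.

Definition lamform (x y : 'rV[rat]_12) : rat := (x *m LamGram *m y^T) 0 0.

Definition inLambda (x : 'rV[rat]_12) : Prop := forall i, x 0 i \is a Num.int.

Definition inZspan m (B : 'M[rat]_(m, 12)) (x : 'rV[rat]_12) : Prop :=
  exists c : 'rV[int]_m, x = map_mx (fun z : int => z%:~R) c *m B.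

Definition QSpan (L : 'rV[rat]_12 -> Prop) (x : 'rV[rat]_12) : Prop :=
  exists n : nat, (0 < n)%N /\ L (n%:R *: x).

Definition dual (L : 'rV[rat]_12 -> Prop) (x : 'rV[rat]_12) : Prop :=
  QSpan L x /\ forall y, L y -> lamform x y \is a Num.int.

Definition primitive (L : 'rV[rat]_12 -> Prop) : Prop :=
  forall x, inLambda x -> QSpan L x -> L x.

Definition Kset (BK : 'M[rat]_(4, 12)) : 'rV[rat]_12 -> Prop := inZspan BK.

Definition Eset (BK : 'M[rat]_(4, 12)) (x : 'rV[rat]_12) : Prop :=
  inLambda x /\ forall k, Kset BK k -> lamform x k = 0.

(* Main.v *)
Require Import Defs.
From HB Require Import structures.
From mathcomp Require Import all_boot all_order all_algebra.
Set Implicit Arguments. Unset Strict Implicit. Unset Printing Implicit Defensive.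
Import Order.TTheory GRing.Theory Num.Theory.
Local Open Scope ring_scope.

Lemma e8_edge_sym i j : e8_edge i j = e8_edge j i.
Proof. by rewrite /e8_edge orbC. Qed.
Lemma e8_entry_sym i j : e8_entry i j = e8_entry j i.
Proof. by rewrite /e8_entry eq_sym e8_edge_sym. Qed.
Lemma lam_entry_sym i j : lam_entry i j = lam_entry j i.
Proof.
rewrite /lam_entry e8_entry_sym [(4 <= j)%N && _]andbC.
by rewrite [(j==0)&&_]andbC [(j==1)&&_]andbC [(j==2)&&_]andbC [(j==3)&&_]andbC
  [X in _ = if X then 2 else _]orbC [X in _ = if _ then _ else if X then 1 else _]orbC.
Qed.
Lemma LamGram_sym : LamGram^T = LamGram.
Proof. by apply/matrixP=> i j; rewrite !mxE lam_entry_sym. Qed.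
Lemma KGram_sym : KGram^T = KGram.
Proof. apply/matrixP=> i j; rewrite !mxE.
by case: i => [[|[|[|[|i]]]] Hi]; case: j => [[|[|[|[|j]]]] Hj]. Qed.
Lemma E8_sym : E8_2Gram^T = E8_2Gram.
Proof. by apply/matrixP=> i j; rewrite !mxE e8_entry_sym. Qed.
Lemma KGram_sq : KGram *m KGram = 4%:M.
Proof.
apply/matrixP=> i j; rewrite !mxE !big_ord_recr big_ord0 /= !mxE.
by case: i => [[|[|[|[|i]]]] Hi]; case: j => [[|[|[|[|j]]]] Hj] //=; rewrite ?mulr0 ?mul0r ?mulr1 ?mul1r ?add0r ?addr0.
Qed.

From mathcomp Require Import ring lra zify.

Lemma lamformDl x y z : lamform (x + y) z = lamform x z + lamform y z.
Proof. by rewrite /lamform !mulmxDl mxE. Qed.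
Lemma lamformZl (a : rat) x z : lamform (a *: x) z = a * lamform x z.
Proof. by rewrite /lamform -!scalemxAl mxE. Qed.
Lemma lamformBl x y z : lamform (x - y) z = lamform x z - lamform y z.
Proof. by rewrite -scaleN1r lamformDl lamformZl mulN1r. Qed.
Lemma lamformC x y : lamform x y = lamform y x.
Proof.
rewrite /lamform.
have -> : (x *m LamGram *m y^T) 0 0 = ((x *m LamGram *m y^T)^T) 0 0 by rewrite [RHS]mxE.
by rewrite !trmx_mul trmxK LamGram_sym mulmxA.
Qed.

Definition zclosed (L : 'rV[rat]_12 -> Prop) :=
  L 0 /\ forall x y, L x -> L y -> L (x - y).

Section Closed.
Variable L : 'rV[rat]_12 -> Prop.
Hypothesis hL : zclosed L.
Lemma zc0 : L 0. Proof. by case: hL. Qed.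
Lemma zcB x y : L x -> L y -> L (x - y). Proof. by case: hL => _; apply. Qed.
Lemma zcN x : L x -> L (- x). Proof. by move=> Hx; rewrite -sub0r; apply: zcB => //; apply: zc0. Qed.
Lemma zcD x y : L x -> L y -> L (x + y).
Proof. by move=> Hx Hy; rewrite -[y]opprK; apply: zcB => //; apply: zcN. Qed.
Lemma zcMn x (n : nat) : L x -> L (x *+ n).
Proof. move=> Hx; elim: n => [|n IH]; first by rewrite mulr0n; apply: zc0. by rewrite mulrS; apply: zcD. Qed.
Lemma zcZ x (n : int) : L x -> L (n%:~R *: x).
Proof.
move=> Hx; rewrite scaler_int; case: n => m; first exact: zcMn.
by rewrite NegzE mulrNz; apply: zcN; apply: zcMn.
Qed.
Lemma zcZn x (n : nat) : L x -> L (n%:R *: x).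
Proof. by move=> Hx; rewrite scaler_nat; apply: zcMn. Qed.

Lemma QSpan_closed : zclosed (QSpan L).
Proof.
split; first by exists 1%N; split => //; rewrite scaler0; apply: zc0.
move=> x y [n [n0 Hn]] [m [m0 Hm]]; exists (n * m)%N; split; first by rewrite muln_gt0 n0.
have -> : (n * m)%:R *: (x - y) = m%:R *: (n%:R *: x) - n%:R *: (m%:R *: y).
  by apply/matrixP=> i j; rewrite !mxE natrM; ring.
by apply: zcB; apply: zcZn.
Qed.
Lemma QSpanI x : L x -> QSpan L x.
Proof. by move=> Hx; exists 1%N; split => //; rewrite scale1r. Qed.
End Closed.

Lemma quad4 p (M : 'M[rat]_p) (c : 'rV[int]_p) :
  M^T = M -> (forall i j, M i j / 2 \is a Num.int) -> (forall i, M i i / 4 \is a Num.int) ->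
  (map_mx intr c *m M *m (map_mx intr c)^T) 0 0 / 4 \is a Num.int.
Proof.
move=> HT H2 H4; set x := map_mx intr c.
have Ms i j : M i j = M j i by rewrite -{1}HT mxE.
pose f i j := x 0 i * M i j * x 0 j.
have xi i : x 0 i \is a Num.int by rewrite mxE intr_int.
have -> : (x *m M *m x^T) 0 0 = \sum_j \sum_i f i j.
  rewrite mxE; apply: eq_bigr => j _; rewrite mxE mulr_suml; apply: eq_bigr => i _.
  by rewrite /f /x !mxE.
have E i j : f i j = (if (i < j)%N then f i j else 0) + (if (val i == val j) then f i j else 0)
   + (if (j < i)%N then f i j else 0).
  by case: ltngtP => _; rewrite ?addr0 ?add0r.
have HC : \sum_(j < p) \sum_(i < p) (if (j < i)%N then f i j else 0) = \sum_(j < p) \sum_(i < p) (if (i < j)%N then f i j else 0).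
  rewrite exchange_big; apply: eq_bigr => a _; apply: eq_bigr => b _.
  by case: ifP => // _; rewrite /f Ms; ring.
under eq_bigr => j _ do under eq_bigr => i _ do rewrite E.
rewrite (eq_bigr (fun j : 'I_p => \sum_(i < p) (if (i < j)%N then f i j else 0) + \sum_(i < p) (if (val i == val j) then f i j else 0)
   + \sum_(i < p) (if (j < i)%N then f i j else 0))); last by move=> j _; rewrite !big_split.
rewrite !big_split /= HC.
set A := \sum_j _; set B := \sum_j _.
have -> : (A + B + A) / 4 = \sum_(j < p) \sum_(i < p) ((if (i < j)%N then f i j else 0) / 2 + (if (val i == val j) then f i j else 0) / 4).
  rewrite (eq_bigr (fun j : 'I_p => (\sum_(i < p) (if (i < j)%N then f i j else 0)) / 2 + (\sum_(i < p) (if (val i == val j) then f i j else 0)) / 4)); last first.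
    by move=> j _; rewrite big_split /= !mulr_suml.
  by rewrite big_split /= -!mulr_suml /A /B; field.
apply: rpred_sum => j _; apply: rpred_sum => i _; apply: rpredD.
  case: ifP => _; last by rewrite mul0r.
  have -> : f i j / 2 = x 0 i * (M i j / 2) * x 0 j by rewrite /f; field.
  by apply: rpredM; [apply: rpredM|].
case: ifP => [/eqP/val_inj ->|_]; last by rewrite mul0r.
have -> : f j j / 4 = x 0 j * (M j j / 4) * x 0 j by rewrite /f; field.
by apply: rpredM; [apply: rpredM|].
Qed.

Lemma introw n (v : 'rV[rat]_n) : (forall i, v 0 i \is a Num.int) ->
  exists c : 'rV[int]_n, v = map_mx intr c.
Proof.
move=> H; exists (map_mx (@Num.floor _) v); apply/matrixP=> i j.
by rewrite !mxE ord1; apply/esym/eqP; rewrite -intrEfloor.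
Qed.

Lemma inZspan_closed m (B : 'M[rat]_(m, 12)) : zclosed (inZspan B).
Proof.
split; first by exists 0; rewrite map_mx0 mul0mx.
by move=> x y [c ->] [d ->]; exists (c - d); rewrite map_mxB mulmxBl.
Qed.

Lemma Lam_closed : zclosed inLambda.
Proof.
split; first by move=> i; rewrite mxE.
by move=> x y Hx Hy i; rewrite !mxE; apply: rpredB.
Qed.

Lemma Eset_closed BK : zclosed (Eset BK).
Proof.
split; first by split; [exact: (zc0 Lam_closed) | move=> k _; rewrite /lamform !mul0mx mxE].
move=> x y [Hx Ox] [Hy Oy]; split; first by exact: (zcB Lam_closed).
by move=> k Hk; rewrite lamformBl Ox // Oy // subr0.
Qed.

Lemma span_Lam m (B : 'M[rat]_(m, 12)) x : (forall i j, B i j \is a Num.int) ->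
  inZspan B x -> inLambda x.
Proof.
move=> HB [c ->] i; rewrite mxE; apply: rpred_sum => k _; apply: rpredM => //.
by rewrite mxE intr_int.
Qed.

Lemma lamform_span m (B : 'M[rat]_(m, 12)) (r s : 'rV[rat]_m) :
  lamform (r *m B) (s *m B) = (r *m (B *m LamGram *m B^T) *m s^T) 0 0.
Proof. by rewrite /lamform trmx_mul !mulmxA. Qed.

Lemma lamform_row m (B : 'M[rat]_(m, 12)) (r : 'rV[rat]_m) i :
  lamform (r *m B) (row i B) = (r *m (B *m LamGram *m B^T)) 0 i.
Proof.
rewrite /lamform !mulmxA !mxE; apply: eq_bigr => k _; by rewrite !mxE.
Qed.

Lemma span_row m (B : 'M[rat]_(m, 12)) i : inZspan B (row i B).
Proof.
exists (delta_mx 0 i); rewrite rowE; congr (_ *m _).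
by apply/matrixP=> a b; rewrite !mxE; case: (_ && _).
Qed.

Lemma KGram2 i j : KGram i j / 2 \is a Num.int.
Proof. by rewrite mxE; case: ifP. Qed.
Lemma KGram4 i : KGram i i / 4 \is a Num.int.
Proof. by rewrite mxE; case: i => [[|[|[|[|i]]]] Hi]. Qed.
Lemma E82 i j : E8_2Gram i j / 2 \is a Num.int.
Proof. by rewrite mxE intrM mulrC mulrA mulVf // mul1r intr_int. Qed.
Lemma E84 i : E8_2Gram i i / 4 \is a Num.int.
Proof. by rewrite mxE /e8_entry eqxx. Qed.

Lemma twod BK d : BK *m LamGram *m BK^T = KGram -> dual (Kset BK) d -> Kset BK (2 *: d).
Proof.
move=> HG [[m [m0 [c Hc]]] Hint].
have m0' : (m%:R : rat) != 0 by rewrite pnatr_eq0 -lt0n.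
set r := (m%:R^-1 : rat) *: map_mx intr c.
have Hd : d = r *m BK by rewrite -scalemxAl -Hc scalerA mulVf // scale1r.
set w := r *m KGram.
have Hw i : w 0 i \is a Num.int.
  by rewrite /w -HG -lamform_row -Hd; apply: Hint; apply: span_row.
have -> : 2 *: d = (w *m (2^-1 *: KGram)) *m BK.
  rewrite Hd /w -scalemxAr -mulmxA KGram_sq mul_mx_scalar scalemxAl scalerA.
  congr ((_ *: _) *m _); field.
have [c' ->] : exists c' : 'rV[int]_4, w *m (2^-1 *: KGram) = map_mx intr c'.
  apply: introw => i; rewrite mxE; apply: rpred_sum => k _; apply: rpredM => //.
  by rewrite mxE mulrC KGram2.
by exists c'.
Qed.

Lemma uniqK BK u v : BK *m LamGram *m BK^T = KGram ->
  QSpan (Kset BK) u -> QSpan (Eset BK) v -> u + v = 0 -> u = 0.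
Proof.
move=> HG [m [m0 [c Hc]]] [m' [m0' [Hv Ov]]] Huv.
have Hu : u = - v by apply/eqP; rewrite -addr_eq0 Huv.
have m0n : (m%:R : rat) != 0 by rewrite pnatr_eq0 -lt0n.
have m0n' : (m'%:R : rat) != 0 by rewrite pnatr_eq0 -lt0n.
have O i : lamform (map_mx intr c *m BK) (row i BK) = 0.
  rewrite -Hc lamformZl Hu -scaleN1r lamformZl.
  have : lamform (m'%:R *: v) (row i BK) = 0 by apply: Ov; apply: span_row.
  rewrite lamformZl => /eqP; rewrite mulf_eq0 (negbTE m0n') /= => /eqP ->.
  by rewrite !mulr0.
have Hc0 : map_mx intr c *m KGram = 0.
  by apply/matrixP => a i; rewrite ord1 -HG -lamform_row O mxE.
have H0 : map_mx intr c = 0 :> 'rV[rat]_4.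
  have := congr1 (mulmx^~ KGram) Hc0; rewrite /= -mulmxA KGram_sq mul_mx_scalar mul0mx => /eqP.
  by rewrite scaler_eq0 => /orP [ | /eqP //].
move: Hc; rewrite H0 mul0mx => /eqP; rewrite scaler_eq0 (negbTE m0n) /=.
by move/eqP.
Qed.

Lemma not_int_half : ~ ((-2 : rat) / 4 \is a Num.int).
Proof.
rewrite intrEfloor; set z := Num.floor _ => /eqP Hz.
have h1 : ((-1)%:~R : rat) < z%:~R by rewrite Hz.
have h2 : (z%:~R : rat) < 0 by rewrite Hz.
rewrite ltrz0 in h2.
rewrite ltr_int in h1.
lia.
Qed.

Unset Implicit Arguments.
Theorem lemma3p11 (BK : 'M[rat]_(4, 12)) (d1 d2 : 'rV[rat]_12) :
  (* K_gamma is a sublattice of Lambda isometric to U(2)+U(2), primitive *)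
  (forall i j, BK i j \is a Num.int) ->
  BK *m LamGram *m BK^T = KGram ->
  primitive (Kset BK) ->
  (* E_gamma = K_gamma^perp is isometric to E8(2), primitive *)
  (exists BE : 'M[rat]_(8, 12),
      (forall x, Eset BK x <-> inZspan BE x) /\ BE *m LamGram *m BE^T = E8_2Gram) ->
  primitive (Eset BK) ->
  (* gluing vectors *)
  dual (Kset BK) d1 -> ~ Kset BK d1 ->
  dual (Eset BK) d2 -> ~ Eset BK d2 ->
  (forall x, inLambda x <->
     exists (n : int) k e, [/\ Kset BK k, Eset BK e & x = n%:~R *: (d1 + d2) + k + e]) ->
  forall del : 'rV[rat]_12, inLambda del -> lamform del del = -2 ->
  forall dK dE : 'rV[rat]_12,
    dual (Kset BK) dK -> dual (Eset BK) dE -> del = dK + dE ->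
  [/\ Kset BK (dK - d1), Eset BK (dE - d2) &
      forall x, inLambda x <->
        exists (n : int) k e, [/\ Kset BK k, Eset BK e & x = n%:~R *: del + k + e]].
Proof.
move=> HBK HG HprimK [BE [HBE HGE]] HprimE Hd1 Hnd1 Hd2 Hnd2 HL del Hdel Hdd dK dE HdK HdE Hsum.
have KC : zclosed (Kset BK) := inZspan_closed BK.
have EC := Eset_closed BK.
have LC := Lam_closed.
have QKC := QSpan_closed KC.
have QEC := QSpan_closed EC.
have KL x : Kset BK x -> inLambda x := span_Lam HBK.
have EL x : Eset BK x -> inLambda x by case.
have L12 : inLambda (d1 + d2).
  apply/HL; exists 1, 0, 0; split; [exact: (zc0 KC) | exact: (zc0 EC) |].
  by apply/matrixP=> i j; rewrite !mxE; ring.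
have K2 := twod HG Hd1.
case/HL: (Hdel) => n [k [e [Hk He Hdn]]].
set q := (n %/ 2)%Z.
have Hn : (n = q * 2 \/ n = q * 2 + 1)%Z.
  have := divz_eq n 2; have := modz_ge0 n (_ : 2 != 0); have := ltz_pmod n (_ : 0 < 2).
  rewrite /q; lia.
have HE : dE = n%:~R *: (d1 + d2) + k + e - dK by rewrite -Hdn Hsum addrC addKr.
have HKd : Kset BK (dK - d1).
  case: Hn => Hn.
    exfalso.
    set a := q%:~R *: (2 *: d1) + k.
    have Ka : Kset BK a by apply: (zcD KC) => //; apply: (zcZ KC).
    set b := del - a.
    have Eb : Eset BK b.
      apply: HprimE; first by apply: (zcB LC) => //; apply: KL.
      have -> : b = n%:~R *: d2 + e.
        rewrite /b /a Hdn Hn; apply/matrixP=> i j; rewrite !mxE intrM; ring.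
      by apply: (zcD QEC); [apply: (zcZ QEC); case: Hd2 | apply: QSpanI].
    have Oba : lamform b a = 0 by apply: Eb.2.
    have Oab : lamform a b = 0 by rewrite lamformC.
    have Hab : del = a + b by rewrite /b addrC subrK.
    clearbody b; clearbody a.
    have Hsq : lamform del del = lamform a a + lamform b b.
      rewrite Hab !lamformDl ![lamform _ (a + b)]lamformC !lamformDl Oab Oba.
      by rewrite addr0 add0r.
    have Ia : lamform a a / 4 \is a Num.int.
      case: Ka => ca ->; rewrite lamform_span HG.
      by apply: quad4; [exact: KGram_sym | exact: KGram2 | exact: KGram4].
    have Ib : lamform b b / 4 \is a Num.int.
      case/HBE: Eb => cb ->; rewrite lamform_span HGE.
      by apply: quad4; [exact: E8_sym | exact: E82 | exact: E84].
    apply: not_int_half; rewrite -Hdd Hsq mulrDl; exact: rpredD.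
  set u := dK - (n%:~R *: d1 + k).
  set v := dE - (n%:~R *: d2 + e).
  have Qu : QSpan (Kset BK) u.
    apply: (zcB QKC); first by case: HdK.
    by apply: (zcD QKC); [apply: (zcZ QKC); case: Hd1 | apply: QSpanI].
  have Qv : QSpan (Eset BK) v.
    apply: (zcB QEC); first by case: HdE.
    by apply: (zcD QEC); [apply: (zcZ QEC); case: Hd2 | apply: QSpanI].
  have Huv : u + v = 0.
    by rewrite /u /v HE; apply/matrixP=> i j; rewrite !mxE; ring.
  have Hu0 := uniqK HG Qu Qv Huv.
  have -> : dK - d1 = q%:~R *: (2 *: d1) + k.
    move/eqP: Hu0; rewrite subr_eq0 => /eqP ->.
    by rewrite Hn; apply/matrixP=> i j; rewrite !mxE intrD intrM; ring.
  by apply: (zcD KC) => //; apply: (zcZ KC).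
have HEd : Eset BK (dE - d2).
  apply: HprimE.
    have -> : dE - d2 = del - (d1 + d2) - (dK - d1).
      by rewrite Hsum; apply/matrixP=> i j; rewrite !mxE; ring.
    by apply: (zcB LC); [apply: (zcB LC) | apply: KL].
  by apply: (zcB QEC); [case: HdE | case: Hd2].
split => // x; split.
  case/HL => n' [k' [e' [Hk' He' ->]]].
  exists n', (k' - n'%:~R *: (dK - d1)), (e' - n'%:~R *: (dE - d2)); split.
  - by apply: (zcB KC) => //; apply: (zcZ KC).
  - by apply: (zcB EC) => //; apply: (zcZ EC).
  - by rewrite Hsum; apply/matrixP=> i j; rewrite !mxE; ring.
case=> n' [k' [e' [Hk' He' ->]]].
apply: (zcD LC); last exact: EL.
apply: (zcD LC); last exact: KL.
exact: (zcZ LC).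
Qed.
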